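(* Let $\mathfrak{S}=(\mathcal{X},\mathsf{S},\gamma,(\Lambda_{a})_{a\in\mathcal{A}})$ be a spectral decomposition system for the Euclidean space $\mathfrak{H}$ and let $D$ be a nonempty $\mathsf{S}$-invariant subset of $\mathcal{X}$. Then: (i) $\operatorname{conv}\gamma^{-1}(D)=\gamma^{-1}(\operatorname{conv}D)$; (ii) if $D$ is convex, then $\operatorname{ext}\gamma^{-1}(D)=\gamma^{-1}(\operatorname{ext}D)$.
   Context: A Euclidean space is a finite-dimensional real inner product space; inner products are written $\langle\cdot,\cdot\rangle$ and norms $\|\cdot\|$. Let $\mathfrak{H}$ and $\mathcal{X}$ be Euclidean spaces, let $\mathsf{S}$ be a group acting on $\mathcal{X}$ by linear isometries, let $\gamma\colon\mathfrak{H}\to\mathcal{X}$, and let $(\Lambda_a)_{a\in\mathcal{A}}$ be a family of linear operators from $\mathcal{X}$ to $\mathfrak{H}$. The orbit of $x$ is $\mathsf{S}\cdot x=\{s\cdot x: s\in\mathsf{S}\}$; a map $f$ on $\mathcal{X}$ is $\mathsf{S}$-invariant if $f(s\cdot x)=f(x)$ for all $s,x$; a subset $D$ of $\mathcal{X}$ is $\mathsf{S}$-invariant if $s\cdot x\in D$ whenever $x\in D$, $s\in\mathsf{S}$. The tuple is a spectral decomposition system for $\mathfrak{H}$ if: [A] every $\Lambda_a$ is an isometry; [B] there exists an $\mathsf{S}$-invariant $\tau\colon\mathcal{X}\to\mathcal{X}$ with $\tau(x)\in\mathsf{S}\cdot x$ for all $x$ and $\gamma\circ\Lambda_a=\tau$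 for all $a$; [C] for every $X\in\mathfrak{H}$ there is $a$ with $X=\Lambda_a\gamma(X)$; [D] $\langle X,Y\rangle\leq\langle\gamma(X),\gamma(Y)\rangle$ for all $X,Y\in\mathfrak{H}$. $\operatorname{conv}C$ is the convex hull of $C$; for convex $C$, $\operatorname{ext}C$ is its set of extreme points. *)

(* Defs.v *)
From HB Require Import structures.
From mathcomp Require Import all_boot all_order all_algebra.
From mathcomp Require Import classical_sets reals.
Set Implicit Arguments. Unset Strict Implicit. Unset Printing Implicit Defensive.
Import Order.TTheory GRing.Theory Num.Theory.
Local Open Scope ring_scope.
Local Open Scope classical_set_scope.

Section Defs.
Variable R : realType.

Definition is_inner_product (V : lmodType R) (ip : V -> V -> R) : Prop :=
  [/\ (forall x y, ip x y = ip y x),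
      (forall (a : R) x y z, ip (a *: x + y) z = a * ip x z + ip y z),
      (forall x, 0 <= ip x x) &
      (forall x, ip x x = 0 -> x = 0)].

Definition ipnorm (V : lmodType R) (ip : V -> V -> R) (x : V) : R :=
  Num.sqrt (ip x x).

Definition is_isometry (U V : lmodType R) (ipU : U -> U -> R) (ipV : V -> V -> R)
  (f : U -> V) : Prop := forall x, ipnorm ipV (f x) = ipnorm ipU x.

Definition is_group (G : Type) (mul : G -> G -> G) (one : G) (inv : G -> G) : Prop :=
  [/\ (forall a b c, mul a (mul b c) = mul (mul a b) c),
      (forall a, mul one a = a),
      (forall a, mul a one = a),
      (forall a, mul (inv a) a = one) &
      (forall a, mul a (inv a) = one)].

Definition is_isometric_action (G : Type) (mul : G -> G -> G) (one : G)
  (X : lmodType R) (ipX : X -> X -> R) (act : G -> X -> X) : Prop :=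
  [/\ (forall x, act one x = x),
      (forall s t x, act (mul s t) x = act s (act t x)),
      (forall s, linear (act s)) &
      (forall s, is_isometry ipX ipX (act s))].

Definition spectral_decomposition_system (H X : lmodType R)
  (ipH : H -> H -> R) (ipX : X -> X -> R)
  (G : Type) (act : G -> X -> X) (gamma : H -> X)
  (A : Type) (Lam : A -> X -> H) : Prop :=
  [/\ (* [A] *) (forall a, is_isometry ipX ipH (Lam a)),
      (* [B] *) (exists tau : X -> X,
                  [/\ (forall s x, tau (act s x) = tau x),
                      (forall x, exists s, tau x = act s x) &
                      (forall a x, gamma (Lam a x) = tau x)]),
      (* [C] *) (forall Y : H, exists a, Y = Lam a (gamma Y)) &
      (* [D] *) (forall Y Z : H, ipH Y Z <= ipX (gamma Y) (gamma Z))].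

Definition invariant_set (G : Type) (X : Type) (act : G -> X -> X) (D : set X) : Prop :=
  forall s x, D x -> D (act s x).

Definition conv (V : lmodType R) (C : set V) : set V :=
  [set v | exists n (l : 'I_n -> R) (x : 'I_n -> V),
     [/\ (forall i, C (x i)), (forall i, 0 <= l i), \sum_(i < n) l i = 1 &
         v = \sum_(i < n) l i *: x i]].

Definition convex_set (V : lmodType R) (C : set V) : Prop :=
  forall x y (t : R), C x -> C y -> 0 <= t -> t <= 1 -> C (t *: x + (1 - t) *: y).

Definition ext (V : lmodType R) (C : set V) : set V :=
  [set x | C x /\ forall y z (t : R), C y -> C z -> 0 < t -> t < 1 ->
             x = t *: y + (1 - t) *: z -> y = x /\ z = x].

End Defs.

(* Main.v *)
Require Import Defs.
From HB Require Import structures.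
From mathcomp Require Import all_boot all_order all_algebra.
From mathcomp Require Import classical_sets reals.
From mathcomp Require Import boolp topology normedtype derive.
From mathcomp Require Import ring lra.
Import Order.TTheory GRing.Theory Num.Theory.
Local Open Scope ring_scope.
Local Open Scope classical_set_scope.
Set Implicit Arguments. Unset Strict Implicit. Unset Printing Implicit Defensive.

Section IP.
Variables (R : realType) (V : lmodType R) (ip : V -> V -> R).
Hypothesis hip : is_inner_product ip.

Lemma ipC x y : ip x y = ip y x. Proof. by case: hip. Qed.
Lemma ipZDl a x y z : ip (a *: x + y) z = a * ip x z + ip y z.
Proof. by case: hip. Qed.
Lemma ip0l z : ip 0 z = 0.
Proof. have := ipZDl 1 0 0 z; rewrite scale1r addr0 mul1r; lra. Qed.
Lemma ipDl x y z : ip (x + y) z = ip x z + ip y z.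
Proof. by have := ipZDl 1 x y z; rewrite scale1r mul1r. Qed.
Lemma ipZl a x z : ip (a *: x) z = a * ip x z.
Proof. by have := ipZDl a x 0 z; rewrite addr0 ip0l addr0. Qed.
Lemma ipNl x z : ip (- x) z = - ip x z.
Proof. by rewrite -scaleN1r ipZl mulN1r. Qed.
Lemma ipBl x y z : ip (x - y) z = ip x z - ip y z.
Proof. by rewrite ipDl ipNl. Qed.
Lemma ip0r z : ip z 0 = 0. Proof. by rewrite ipC ip0l. Qed.
Lemma ipDr x y z : ip z (x + y) = ip z x + ip z y.
Proof. by rewrite ipC ipDl !(ipC z). Qed.
Lemma ipZr a x z : ip z (a *: x) = a * ip z x.
Proof. by rewrite ipC ipZl ipC. Qed.
Lemma ipNr x z : ip z (- x) = - ip z x.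
Proof. by rewrite ipC ipNl ipC. Qed.
Lemma ipBr x y z : ip z (x - y) = ip z x - ip z y.
Proof. by rewrite ipDr ipNr. Qed.
Lemma ip_suml (I : Type) (r : seq I) (P : pred I) (f : I -> V) z :
  ip (\sum_(i <- r | P i) f i) z = \sum_(i <- r | P i) ip (f i) z.
Proof. exact: (big_morph (fun x => ip x z) (fun x y => ipDl x y z) (ip0l z)). Qed.
Lemma ip_sumr (I : Type) (r : seq I) (P : pred I) (f : I -> V) z :
  ip z (\sum_(i <- r | P i) f i) = \sum_(i <- r | P i) ip z (f i).
Proof. rewrite ipC ip_suml; apply: eq_bigr => i _; exact: ipC. Qed.
Lemma ip_ge0 x : 0 <= ip x x. Proof. by case: hip. Qed.
Lemma ip_eq0 x : ip x x = 0 -> x = 0. Proof. by case: hip => _ _ _; apply. Qed.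
Lemma ip_sub2 x y : ip (x - y) (x - y) = ip x x - 2 * ip x y + ip y y.
Proof. rewrite ipBl !ipBr (ipC y x); ring. Qed.
Lemma ip_eq_sub x y : ip (x - y) (x - y) = 0 -> x = y.
Proof. by move=> /ip_eq0 /eqP; rewrite subr_eq0 => /eqP. Qed.
Lemma ip_le0_eq x y : ip x x - 2 * ip x y + ip y y <= 0 -> x = y.
Proof. rewrite -ip_sub2 => h; apply: ip_eq_sub; apply/eqP; rewrite eq_le h ip_ge0 //. Qed.
Lemma ip_amgm x y : 2 * ip x y <= ip x x + ip y y.
Proof. have := ip_ge0 (x - y); rewrite ip_sub2; lra. Qed.
End IP.

Section Lin.
Variables (R : realType) (U V : lmodType R) (f : U -> V).
Hypothesis hf : linear f.
Lemma linE a x y : f (a *: x + y) = a *: f x + f y.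
Proof. exact: hf. Qed.
Lemma lin0 : f 0 = 0.
Proof. have := linE 1 0 0; rewrite !scale1r addr0 => h.
by apply: (addrI (f 0)); rewrite addr0 -h. Qed.
Lemma linD x y : f (x + y) = f x + f y.
Proof. by have := linE 1 x y; rewrite !scale1r. Qed.
Lemma linZ a x : f (a *: x) = a *: f x.
Proof. by have := linE a x 0; rewrite !addr0 lin0 addr0. Qed.
Lemma linN x : f (- x) = - f x.
Proof. by rewrite -scaleN1r linZ scaleN1r. Qed.
Lemma linB x y : f (x - y) = f x - f y.
Proof. by rewrite linD linN. Qed.
Lemma lin_sum (I : Type) (r : seq I) (P : pred I) (g : I -> U) :
  f (\sum_(i <- r | P i) g i) = \sum_(i <- r | P i) f (g i).
Proof. exact: (big_morph f linD lin0). Qed.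
End Lin.

Section Iso.
Variables (R : realType) (U V : lmodType R) (ipU : U -> U -> R) (ipV : V -> V -> R).
Hypotheses (hU : is_inner_product ipU) (hV : is_inner_product ipV).
Variable f : U -> V.
Hypotheses (hf : linear f) (hiso : is_isometry ipU ipV f).
Lemma iso_nn x : ipV (f x) (f x) = ipU x x.
Proof. have := hiso x; rewrite /ipnorm => /(congr1 (fun t => t ^+ 2)).
by rewrite !sqr_sqrtr ?ip_ge0. Qed.
Lemma iso_ip x y : ipV (f x) (f y) = ipU x y.
Proof. have := iso_nn (x - y); rewrite linB // !ip_sub2 // !iso_nn; lra. Qed.
Lemma iso_inj x y : f x = f y -> x = y.
Proof. move=> e; apply: (ip_eq_sub hU); rewrite -iso_nn linB // e subrr ip0l //. Qed.
End Iso.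


Section Cvx.
Variables (R : realType) (V : lmodType R).

Lemma comb_split n (l : 'I_n.+1 -> R) (x : 'I_n.+1 -> V) (a : R) :
  a != 0 -> 
  \sum_(i < n.+1) l i *: x i =
  l ord_max *: x ord_max + a *: \sum_(i < n) (l (widen_ord (leqnSn n) i) / a) *: x (widen_ord (leqnSn n) i).
Proof.
move=> a0; rewrite big_ord_recr /= addrC; congr (_ + _).
rewrite scaler_sumr; apply: eq_bigr => i _; rewrite scalerA.
by rewrite mulrCA mulfV // mulr1.
Qed.

Lemma rest_zero n (l : 'I_n.+1 -> R) (x : 'I_n.+1 -> V) :
  (forall i, 0 <= l i) -> \sum_(i < n.+1) l i = 1 -> l ord_max = 1 ->
  \sum_(i < n.+1) l i *: x i = x ord_max.
Proof.
move=> l0 l1 e1; move: l1; rewrite big_ord_recr /= e1 => h.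
have h0 : \sum_(i < n) l (widen_ord (leqnSn n) i) = 0 by lra.
have z : forall i : 'I_n, l (widen_ord (leqnSn n) i) = 0.
  move=> i; apply/eqP; move/eqP: h0; rewrite psumr_eq0 //.
  by move/allP/(_ i); apply; rewrite mem_index_enum.
rewrite big_ord_recr /= big1 ?add0r ?e1 ?scale1r // => i _; by rewrite z scale0r.
Qed.

Lemma sum_le1 n (l : 'I_n.+1 -> R) :
  (forall i, 0 <= l i) -> \sum_(i < n.+1) l i = 1 -> l ord_max <= 1.
Proof.
move=> l0; rewrite big_ord_recr /= => h.
have : 0 <= \sum_(i < n) l (widen_ord (leqnSn n) i) by apply: sumr_ge0 => i _.
lra.
Qed.

Lemma convex_conv (C : set V) : convex_set C -> forall n (l : 'I_n -> R) (x : 'I_n -> V),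
  (forall i, C (x i)) -> (forall i, 0 <= l i) -> \sum_(i < n) l i = 1 ->
  C (\sum_(i < n) l i *: x i).
Proof.
move=> cC; elim=> [|n IH] l x Cx l0 l1.
  by move: l1; rewrite big_ord0 => /eqP; rewrite eq_sym oner_eq0.
have lm1 := sum_le1 l0 l1.
have [e1|ne1] := eqVneq (l ord_max) 1; first by rewrite rest_zero.
have a0 : 1 - l ord_max != 0 by rewrite subr_eq0 eq_sym.
rewrite (@comb_split n l x _ a0).
apply: cC => //.
apply: IH => //.
- by move=> i; apply: divr_ge0 => //; have := lm1; lra.
- rewrite -mulr_suml; move: l1; rewrite big_ord_recr /= => l1.
  have -> : \sum_(i < n) l (widen_ord (leqnSn n) i) = 1 - l ord_max by lra.
  by rewrite mulfV.
Qed.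

Lemma ext_comb (C : set V) : convex_set C -> forall x, ext C x ->
  forall n (l : 'I_n -> R) (k : 'I_n -> V),
  (forall i, C (k i)) -> (forall i, 0 <= l i) -> \sum_(i < n) l i = 1 ->
  x = \sum_(i < n) l i *: k i -> exists i, k i = x.
Proof.
move=> cC x [Cx xe]; elim=> [|n IH] l k Ck l0 l1 xk.
  by move: l1; rewrite big_ord0 => /eqP; rewrite eq_sym oner_eq0.
have lm1 := sum_le1 l0 l1.
have [e1|ne1] := eqVneq (l ord_max) 1.
  by exists ord_max; rewrite xk rest_zero.
have [e0|ne0] := eqVneq (l ord_max) 0.
  have l1' : \sum_(i < n) l (widen_ord (leqnSn n) i) = 1.
    by move: l1; rewrite big_ord_recr /= e0 addr0.
  have xk' : x = \sum_(i < n) l (widen_ord (leqnSn n) i) *: k (widen_ord (leqnSn n) i).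
    by rewrite xk big_ord_recr /= e0 scale0r addr0.
  have [i ki] := IH (fun i => l (widen_ord (leqnSn n) i)) (fun i => k (widen_ord (leqnSn n) i)) (fun i => Ck _) (fun i => l0 _) l1' xk'.
  by exists (widen_ord (leqnSn n) i).
have a0 : 1 - l ord_max != 0 by rewrite subr_eq0 eq_sym.
move: xk; rewrite (@comb_split n l k _ a0) => xk.
exists ord_max.
have lp : 0 < l ord_max by rewrite lt_def ne0 l0.
have lt1 : l ord_max < 1 by rewrite lt_def eq_sym ne1 lm1.
have [] := xe _ _ (l ord_max) (Ck ord_max) _ lp lt1 xk => //.
apply: convex_conv => //.
- by move=> i; apply: divr_ge0 => //; lra.
- rewrite -mulr_suml; move: l1; rewrite big_ord_recr /= => l1.
  have -> : \sum_(i < n) l (widen_ord (leqnSn n) i) = 1 - l ord_max by lra.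
  by rewrite mulfV.
Qed.

End Cvx.


Section Cara.
Variables (R : realType) (X : vectType R).

Lemma dependent m : (\dim {:X} < m)%N -> forall (v : 'I_m -> X),
  exists c : 'I_m -> R, \sum_(i < m) c i *: v i = 0 /\ exists i, c i != 0.
Proof.
move=> hm v; pose T := [tuple v i | i < m].
have nf : ~~ free T.
  apply/negP; rewrite /free size_tuple => /eqP e.
  have := dimvS (subvf <<T>>%VS); rewrite e => h.
  by move: (leq_trans hm h); rewrite ltnn.
apply: contrapT => H; suff: free T by rewrite (negbTE nf).
apply/freeP => c hc i.
apply/eqP; apply: contrapT => ci; apply: H; exists c; split; last by exists i; apply/negP.
by rewrite -[RHS]hc; apply: eq_bigr => j _; rewrite -tnth_nth tnth_mktuple.
Qed.

Lemma affine_dependent m : (\dim {:X} < m)%N -> forall (k : 'I_m.+1 -> X),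
  exists mu : 'I_m.+1 -> R, [/\ \sum_i mu i = 0, \sum_i mu i *: k i = 0 & exists i, 0 < mu i].
Proof.
move=> hm k; have [c [hc [i0 ci0]]] := dependent hm (fun j => k (lift ord0 j) - k ord0).
have [mu [mu0 muS]] : exists mu : 'I_m.+1 -> R, mu ord0 = - \sum_j c j /\ forall j, mu (lift ord0 j) = c j.
  exists (fun i => if unlift ord0 i is Some j then c j else - \sum_j c j).
  by split; [rewrite unlift_none | move=> j; rewrite liftK].
have s0 : \sum_i mu i = 0.
  rewrite big_ord_recl mu0.
  have -> : \sum_(i < m) mu (lift ord0 i) = \sum_(i < m) c i by apply: eq_bigr => j _; exact: muS.
  by rewrite addNr.
exists mu; split => //.
  rewrite big_ord_recl mu0.
  have -> : \sum_(i < m) mu (lift ord0 i) *: k (lift ord0 i) = \sum_(i < m) c i *: k (lift ord0 i).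
    by apply: eq_bigr => j _; rewrite muS.
  rewrite -[RHS]hc; under [RHS]eq_bigr do rewrite scalerBr.
  by rewrite sumrB scaleNr scaler_suml addrC.
apply: contrapT => H.
have le0 i : mu i <= 0 by rewrite leNgt; apply/negP => h; apply: H; exists i.
have z : forall i, mu i = 0.
  have h : \sum_i (- mu i) = 0 by rewrite sumrN s0 oppr0.
  have h2 : forall i : 'I_m.+1, predT i -> 0 <= - mu i by move=> j _; rewrite oppr_ge0.
  move=> i; have := @psumr_eq0P _ _ predT (fun i => - mu i) h2 h i isT.
  by move/eqP; rewrite oppr_eq0 => /eqP.
by move: ci0; rewrite -muS z eqxx.
Qed.


Lemma cara_step m : (\dim {:X} < m)%N -> forall (l : 'I_m.+1 -> R) (k : 'I_m.+1 -> X),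
  (forall i, 0 <= l i) -> \sum_i l i = 1 ->
  exists (l' : 'I_m -> R) (k' : 'I_m -> X),
  [/\ forall j, exists i, k' j = k i, forall j, 0 <= l' j, \sum_j l' j = 1 &
      \sum_j l' j *: k' j = \sum_i l i *: k i].
Proof.
move=> hm l k l0 l1.
have [mu [mus muk [i0 mui0]]] := affine_dependent hm k.
pose P := fun i => 0 < mu i.
pose F := fun i => l i / mu i.
have [j Pj minj] : exists2 j, P j & forall i, P i -> F j <= F i.
  case: (@arg_minP _ _ _ i0 P F mui0) => j Pj minj.
  by exists j.
pose t := F j.
have t0 : 0 <= t by apply: divr_ge0 => //; apply: ltW.
pose l2 i := l i - t * mu i.
have l20 i : 0 <= l2 i.
  rewrite /l2 subr_ge0; case: (ltrP 0 (mu i)) => h.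
    by have := minj i h; rewrite /F /t ler_pdivlMr.
  by apply: le_trans (l0 i); apply: mulr_ge0_le0.
have l2j : l2 j = 0 by rewrite /l2 /t /F divfK ?subrr // gt_eqF.
have l21 : \sum_i l2 i = 1.
  by rewrite /l2 sumrB -mulr_sumr mus mulr0 subr0.
have l2k : \sum_i l2 i *: k i = \sum_i l i *: k i.
  rewrite /l2; under eq_bigr do rewrite scalerBl.
  by rewrite sumrB; under [X in _ - X]eq_bigr do rewrite -scalerA; rewrite -scaler_sumr muk scaler0 subr0.
exists (fun i => l2 (lift j i)), (fun i => k (lift j i)); split => //.
- by move=> i; exists (lift j i).
- by move: l21; rewrite (bigD1_ord j) //= l2j add0r.
- by rewrite -l2k (bigD1_ord j) //= l2j scale0r add0r.
Qed.

End Cara.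


Lemma real_lemma (R : realType) (a b : R) :
  0 <= b -> (forall t, 0 < t -> t <= 1 -> 2 * a <= t * b) -> a <= 0.
Proof.
move=> b0 H; rewrite leNgt; apply/negP => a0.
have ab : 0 < a + b by lra.
have t0 : 0 < a / (a + b) by apply: divr_gt0.
have t1 : a / (a + b) <= 1 by rewrite ler_pdivrMr // mul1r; lra.
have := H _ t0 t1.
rewrite mulrAC ler_pdivlMr // => h.
have : 2 * a * (a + b) <= a * b by [].
nra.
Qed.

Section HL.
Variables (R : realType) (X : vectType R) (ip : X -> X -> R).
Hypothesis hip : is_inner_product ip.

Definition combm (K : set X) m : set X :=
  [set p | exists (l : 'I_m -> R) (k : 'I_m -> X),
     [/\ forall i, K (k i), forall i, 0 <= l i, \sum_i l i = 1 & p = \sum_i l i *: k i]].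

Lemma combm_step (K : set X) p k0 t :
  combm K (\dim {:X}).+1 p -> K k0 -> 0 <= t -> t <= 1 ->
  combm K (\dim {:X}).+1 ((1 - t) *: p + t *: k0).
Proof.
set m := (\dim {:X}).+1.
move=> [l [k [Kk l0 l1 ->]]] Kk0 t0 t1.
have wne (j : 'I_m) : (widen_ord (leqnSn m) j == ord_max) = false.
  by apply/negbTE; rewrite neq_ltn /= ltn_ord.
have [l' [l'm l'S]] : exists l' : 'I_m.+1 -> R, l' ord_max = t /\ forall j, l' (widen_ord (leqnSn m) j) = (1 - t) * l j.
  exists (fun i => if i == ord_max then t else (1 - t) * l (inord i)); split; first by rewrite eqxx.
  by move=> j; rewrite wne /= inord_val.
have [k' [k'm k'S]] : exists k' : 'I_m.+1 -> X, k' ord_max = k0 /\ (forall j, k' (widen_ord (leqnSn m) j) = k j) /\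
   (forall i, k' i = k0 \/ exists j, k' i = k j).
  exists (fun i => if i == ord_max then k0 else k (inord i)); split; first by rewrite eqxx.
  split; first by move=> j; rewrite wne /= inord_val.
  by move=> i; case: eqP => _; [left | right; exists (inord i)].
case: k'S => k'S k'a.
have l'0 i : 0 <= l' i.
  case: (unliftP ord_max i) => [j ->|->]; last by rewrite l'm.
  have -> : lift ord_max j = widen_ord (leqnSn m) j by apply: val_inj; rewrite /= /bump leqNgt ltn_ord.
  by rewrite l'S; apply: mulr_ge0 => //; lra.
have l'1 : \sum_i l' i = 1.
  rewrite big_ord_recr /= l'm; under eq_bigr do rewrite l'S.
  by rewrite -mulr_sumr l1 mulr1 subrK.
have [l2 [k2 [hk2 l20 l21 e]]] := @cara_step R X m (ltnSn _) l' k' l'0 l'1.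
exists l2, k2; split => //.
- by move=> j; have [i ->] := hk2 j; case: (k'a i) => [->|[j' ->]].
- rewrite e [RHS]big_ord_recr /= l'm k'm; congr (_ + _).
  rewrite scaler_sumr; apply: eq_bigr => j _; by rewrite l'S k'S scalerA.
Qed.

Lemma HL_core (K : set X) y :
  (exists2 p, combm K (\dim {:X}).+1 p & forall q, combm K (\dim {:X}).+1 q ->
      ip (y - p) (y - p) <= ip (y - q) (y - q)) ->
  (forall w, exists2 k, K k & ip y w <= ip k w) ->
  combm K (\dim {:X}).+1 y.
Proof.
move=> [p Cp pmin] hs.
have var : forall k, K k -> ip (k - p) (y - p) <= 0.
  move=> k Kk; apply: (real_lemma (ip_ge0 hip (k - p))) => t t0 t1.
  have := pmin _ (combm_step Cp Kk (ltW t0) t1).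
  have -> : y - ((1 - t) *: p + t *: k) = (y - p) - t *: (k - p).
    by rewrite scalerBl scale1r scalerBr !opprD !opprK !addrA addrAC.
  rewrite [X in _ <= X](ip_sub2 hip) ipZr // ipZl // ipZr // (ipC hip (y - p)) => h.
  have h2 : t * (2 * ip (k - p) (y - p)) <= t * (t * ip (k - p) (k - p)) by lra.
  by rewrite ler_pM2l in h2.
have [k Kk hk] := hs (y - p).
have := var k Kk; rewrite (ipBl hip) => h.
have h3 : ip (y - p) (y - p) <= 0 by rewrite (ipBl hip); lra.
have : y - p = 0 by apply: (ip_eq0 hip); apply/eqP; rewrite eq_le h3 ip_ge0.
by move/eqP; rewrite subr_eq0 => /eqP ->.
Qed.

End HL.

Import numFieldNormedType.Exports.
Import VectorInternalTheory.

Section Cont.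
Variables (R : realType) (N : nat).
Notation T := 'rV[R]_N.

Lemma cont_cst (c : R) : continuous (fun _ : T => c).
Proof. exact: cst_continuous. Qed.

Lemma cont_coord k : continuous (fun v : T => v 0 k).
Proof. exact: coord_continuous. Qed.

Lemma cont_add (f g : T -> R) : continuous f -> continuous g -> continuous (fun v => f v + g v).
Proof. by move=> hf hg x; exact: (continuousD (hf x) (hg x)). Qed.

Lemma cont_mul (f g : T -> R) : continuous f -> continuous g -> continuous (fun v => f v * g v).
Proof. by move=> hf hg x; exact: (continuousM (hf x) (hg x)). Qed.

Lemma cont_sum (I : Type) (r : seq I) (f : I -> T -> R) :
  (forall i, continuous (f i)) -> continuous (fun v => \sum_(i <- r) f i v).
Proof.
move=> hf; elim: r => [|a r IH].
  by under eq_fun do rewrite big_nil; apply: cont_cst.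
by under eq_fun do rewrite big_cons; apply: cont_add.
Qed.

End Cont.

Section ContIP.
Variables (R : realType) (N : nat) (X : lmodType R) (ip : X -> X -> R).
Hypothesis hip : is_inner_product ip.
Notation T := 'rV[R]_N.

Lemma cont_ip_lin (I : finType) (a : I -> T -> R) (e : I -> X) c :
  (forall i, continuous (a i)) -> continuous (fun v => ip (\sum_i a i v *: e i) c).
Proof.
move=> ha.
have -> : (fun v => ip (\sum_i a i v *: e i) c) = (fun v => \sum_i a i v * ip (e i) c).
  by apply: funext => v; rewrite (ip_suml hip); apply: eq_bigr => i _; rewrite (ipZl hip).
by apply: cont_sum => i; apply: cont_mul => //; apply: cont_cst.
Qed.

Lemma cont_ip_quad (I J : finType) (a : I -> T -> R) (b : J -> T -> R) (e : I -> X) (f : J -> X) :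
  (forall i, continuous (a i)) -> (forall j, continuous (b j)) ->
  continuous (fun v => ip (\sum_i a i v *: e i) (\sum_j b j v *: f j)).
Proof.
move=> ha hb.
have -> : (fun v => ip (\sum_i a i v *: e i) (\sum_j b j v *: f j)) =
   (fun v => \sum_i a i v * \sum_j b j v * ip (e i) (f j)).
  apply: funext => v; rewrite (ip_suml hip); apply: eq_bigr => i _; rewrite (ipZl hip).
  congr (_ * _); rewrite (ip_sumr hip); apply: eq_bigr => j _; by rewrite (ipZr hip).
apply: cont_sum => i; apply: cont_mul => //.
by apply: cont_sum => j; apply: cont_mul => //; apply: cont_cst.
Qed.

End ContIP.

Section MxNorm.
Variables (R : realType).

Lemma entry_le_norm p q (u : 'M[R]_(p, q)) i j : `|u i j| <= `|u|.
Proof.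
rewrite [leRHS]/Num.Def.normr /= mx_normrE; apply/bigmax_geP; right => /=.
by exists (i, j).
Qed.

Lemma norm_le_entries p q (u : 'M[R]_(p, q)) B :
  0 <= B -> (forall i j, `|u i j| <= B) -> `|u| <= B.
Proof.
move=> B0 hB; rewrite [leLHS]/Num.Def.normr /= mx_normrE; apply/bigmax_leP; split => //.
Qed.

Lemma bounded_setP N (A : set 'rV[R]_N) B : (forall v, A v -> `|v| <= B) -> bounded_set A.
Proof.
move=> hB; change [bounded x | x in A]; rewrite /bounded_near; near=> M => v Av /=.
apply: le_trans (hB _ Av) _; near: M; apply: nbhs_pinfty_ge; exact: num_real.
Unshelve. all: end_near. Qed.

End MxNorm.

Section Coords.
Variables (R : realType) (X : vectType R) (ip : X -> X -> R).
Hypothesis hip : is_inner_product ip.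

Definition ebas (j : 'I_(dim X)) : X := r2v (delta_mx 0 j).

Lemma r2v_sum (u : 'rV[R]_(dim X)) : r2v u = \sum_j u 0 j *: ebas j.
Proof. by rewrite {1}(row_sum_delta u) linear_sum; apply: eq_bigr => j _; rewrite linearZ. Qed.

Definition Qf (u : 'rV[R]_(dim X)) := ip (r2v u) (r2v u).

Lemma Q_cont : continuous Qf.
Proof.
have -> : Qf = (fun u => ip (\sum_j u 0 j *: ebas j) (\sum_j u 0 j *: ebas j)).
  by apply: funext => u; rewrite /Qf r2v_sum.
by apply: cont_ip_quad => // j; apply: cont_coord.
Qed.

Lemma QZ a u : Qf (a *: u) = a ^+ 2 * Qf u.
Proof. by rewrite /Qf linearZ (ipZl hip) (ipZr hip) mulrA expr2. Qed.

Lemma Q_ge0 u : 0 <= Qf u. Proof. exact: ip_ge0. Qed.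

Lemma Q_gt0 u : u != 0 -> 0 < Qf u.
Proof.
move=> u0; rewrite lt_def Q_ge0 andbT; apply/eqP => /(ip_eq0 hip) h.
by move/eqP: u0; apply; rewrite -(r2vK u) h linear0.
Qed.

Lemma norm_equiv : exists C, 0 <= C /\ forall u, `|u| ^+ 2 <= C * Qf u.
Proof.
have unit_norm (u : 'rV[R]_(dim X)) : u != 0 -> `| `|u|^-1 *: u | = 1.
  by move=> u0; apply: normrZV; rewrite unitfE normr_eq0.
have decomp (u : 'rV[R]_(dim X)) : u != 0 -> Qf u = `|u| ^+ 2 * Qf (`|u|^-1 *: u).
  by move=> u0; rewrite QZ mulrA -exprMn mulfV ?normr_eq0 // expr1n mul1r.
case: (pselect ([set u : 'rV[R]_(dim X) | `|u| = 1] !=set0)) => [ne|e]; last first.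
  exists 0; split => // u; rewrite mul0r.
  have [->|u0] := eqVneq u 0; first by rewrite normr0 expr0n.
  by exfalso; apply: e; exists (`|u|^-1 *: u); apply: unit_norm.
have cS : compact [set u : 'rV[R]_(dim X) | `|u| = 1].
  apply: bounded_closed_compact.
    by apply: (@bounded_setP _ _ _ 1) => v /= ->.
  have := proj1 (continuous_closedP _) (@norm_continuous R 'rV[R]_(dim X)) [set x : R | x = 1] (@closed_eq R 1). by [].
have [c cS1 cmin] := EVT_min_rV ne cS (continuous_subspaceT Q_cont).
have c0 : c != 0.
  by apply/eqP => c0; move: cS1; rewrite inE /= c0 normr0 => /eqP; rewrite eq_sym oner_eq0.
have Qc := Q_gt0 c0.
exists (Qf c)^-1; split; first by rewrite invr_ge0 ltW.
move=> u; have [->|u0] := eqVneq u 0.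
  rewrite normr0 expr2 mul0r; apply: mulr_ge0; [rewrite invr_ge0; exact: ltW | exact: Q_ge0].
rewrite (decomp _ u0) mulrCA; apply: ler_peMr; first by apply: exprn_ge0.
rewrite ler_pdivlMl // mulr1.
by apply: cmin; rewrite inE /=; apply: unit_norm.
Qed.

End Coords.

Import numFieldNormedType.Exports.
Import VectorInternalTheory.

Lemma closed_forall (R : realType) N (I : Type) (f : I -> set 'rV[R]_N) :
  (forall i, closed (f i)) -> closed [set v | forall i, f i v].
Proof.
move=> hf t clft i; apply: (hf i) => A /clft [s [fs As]].
by exists s; split => //; apply: fs.
Qed.

Lemma closed_pre (R : realType) N (f : 'rV[R]_N -> R) (A : set R) :
  continuous f -> closed A -> closed (f @^-1` A).
Proof. by move=> cf cA; apply: (proj1 (continuous_closedP f) cf). Qed.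

Lemma le_sum1 (R : realType) m (l : 'I_m -> R) i :
  (forall i, 0 <= l i) -> \sum_i l i = 1 -> l i <= 1.
Proof.
move=> l0 l1; move: l1; rewrite (bigD1 i) //= => h.
have : 0 <= \sum_(j | j != i) l j by apply: sumr_ge0.
lra.
Qed.

Section Minim.
Variables (R : realType) (X : vectType R) (ip : X -> X -> R).
Hypothesis hip : is_inner_product ip.
Variables (r : R) (h : X -> R).
Definition Kset : set X := [set z | ip z z = r /\ forall w, ip z w <= h w].
Variable m : nat.
Notation n := (dim X).
Notation N := (m.+1 * (1 + n))%N.

Definition wt (v : 'rV[R]_N) i := v 0 (mxvec_index i (lshift n (ord0 : 'I_1))).
Definition pc (v : 'rV[R]_N) i j := v 0 (mxvec_index i (rshift 1 j)).
Definition pt (v : 'rV[R]_N) i : X := \sum_j pc v i j *: ebas j.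
Definition comb (v : 'rV[R]_N) : X := \sum_i wt v i *: pt v i.

Definition Pset : set 'rV[R]_N :=
  [set v | forall i, 0 <= wt v i] `&` [set v | \sum_i wt v i = 1] `&`
  [set v | forall i, ip (pt v i) (pt v i) = r] `&`
  [set v | forall i w, ip (pt v i) w <= h w].

Lemma Pset_closed : closed Pset.
Proof.
apply: closedI; first apply: closedI; first apply: closedI.
- apply: closed_forall => i.
  apply: (@closed_pre R N (fun v => wt v i) [set x | 0 <= x]); last exact: closed_ge.
  exact: cont_coord.
- apply: (@closed_pre R N (fun v => \sum_i wt v i) [set x | x = 1]); last exact: closed_eq.
  by apply: cont_sum => i; apply: cont_coord.
- apply: closed_forall => i.
  apply: (@closed_pre R N (fun v => ip (pt v i) (pt v i)) [set x | x = r]); last exact: closed_eq.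
  by apply: cont_ip_quad => // j; apply: cont_coord.
- apply: closed_forall => i; apply: closed_forall => w.
  apply: (@closed_pre R N (fun v => ip (pt v i) w) [set x | x <= h w]); last exact: closed_le.
  by apply: cont_ip_lin => // j; apply: cont_coord.
Qed.

Lemma pt_r2v v i : pt v i = r2v (\row_j pc v i j).
Proof. by rewrite r2v_sum /pt; apply: eq_bigr => j _; rewrite mxE. Qed.

Lemma Pset_bounded : bounded_set Pset.
Proof.
have [C [C0 hC]] := norm_equiv hip.
apply: (@bounded_setP _ _ _ (1 + C * r)) => v [[[w0 w1] pr] ph].
have Bge : forall i, `|\row_j pc v i j| <= 1 + C * r.
  move=> i; set u := \row_j pc v i j.
  have := hC u; rewrite /Qf -pt_r2v pr => hu.
  have : `|u| <= 1 + `|u| ^+ 2 by have := sqr_ge0 (`|u| - 1); rewrite !expr2; have := normr_ge0 u; nra.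
  lra.
have Cr0 : 0 <= C * r.
  have := hC (\row_j pc v ord0 j); rewrite /Qf -pt_r2v pr; apply: le_trans.
  exact: sqr_ge0.
have B0 : 0 <= 1 + C * r by lra.
apply: norm_le_entries => // i0 k.
case: (mxvec_indexP k) => i j; rewrite -(splitK j); case: (split j) => [j1|j2] /=.
- rewrite (ord1 j1) (ord1 i0) -/(wt v i) ger0_norm //.
  have := le_sum1 i w0 w1; lra.
- rewrite (ord1 i0) -/(pc v i j2); apply: le_trans (Bge i).
  have := entry_le_norm (\row_j pc v i j) 0 j2; by rewrite mxE.
Qed.

Lemma Pset_compact : compact Pset.
Proof. exact: bounded_closed_compact Pset_bounded Pset_closed. Qed.

Lemma comb_in v : Pset v -> combm Kset m.+1 (comb v).
Proof.
move=> [[[w0 w1] pr] ph]; exists (wt v), (pt v); split => //.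
Qed.

Lemma comb_rep (l : 'I_m.+1 -> R) (k : 'I_m.+1 -> X) :
  (forall i, Kset (k i)) -> (forall i, 0 <= l i) -> \sum_i l i = 1 ->
  exists2 v, Pset v & comb v = \sum_i l i *: k i.
Proof.
move=> Kk l0 l1.
pose v : 'rV[R]_N := mxvec (row_mx (\col_i l i) (\matrix_(i, j) v2r (k i) 0 j)).
have wv i : wt v i = l i by rewrite /wt mxvecE row_mxEl mxE.
have pv i : pt v i = k i.
  rewrite /pt -{1}(v2rK (k i)) r2v_sum; apply: eq_bigr => j _.
  by rewrite /pc mxvecE row_mxEr mxE.
exists v.
  split; first split; first split.
  - by move=> i; rewrite wv.
  - by rewrite /= (eq_bigr _ (fun i _ => wv i)).
  - by move=> i; rewrite pv; case: (Kk i).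
  - by move=> i w; rewrite pv; case: (Kk i) => _; apply.
by rewrite /comb; apply: eq_bigr => i _; rewrite wv pv.
Qed.

Lemma comb_pair v : comb v = \sum_(p : 'I_m.+1 * 'I_n) (wt v p.1 * pc v p.1 p.2) *: ebas p.2.
Proof.
rewrite -(pair_big xpredT xpredT (fun i j => (wt v i * pc v i j) *: ebas j)) /comb.
apply: eq_bigr => i _; rewrite /pt scaler_sumr; apply: eq_bigr => j _; by rewrite scalerA.
Qed.

Lemma F_cont y : continuous (fun v => ip (y - comb v) (y - comb v)).
Proof.
have -> : (fun v => ip (y - comb v) (y - comb v)) =
  (fun v => ip y y + (-2) * ip (comb v) y + ip (comb v) (comb v)).
  by apply: funext => v; rewrite (ip_sub2 hip) (ipC hip y); ring.
have hc : forall p : 'I_m.+1 * 'I_n, continuous (fun v : 'rV[R]_N => wt v p.1 * pc v p.1 p.2).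
  by move=> p; apply: cont_mul; apply: cont_coord.
apply: cont_add; first apply: cont_add.
- exact: cont_cst.
- apply: cont_mul; first exact: cont_cst.
  have -> : (fun v => ip (comb v) y) = (fun v => ip (\sum_(p : 'I_m.+1 * 'I_n) (wt v p.1 * pc v p.1 p.2) *: ebas p.2) y).
    by apply: funext => v; rewrite comb_pair.
  exact: cont_ip_lin.
- have -> : (fun v => ip (comb v) (comb v)) = (fun v => ip (\sum_(p : 'I_m.+1 * 'I_n) (wt v p.1 * pc v p.1 p.2) *: ebas p.2) (\sum_(p : 'I_m.+1 * 'I_n) (wt v p.1 * pc v p.1 p.2) *: ebas p.2)).
    by apply: funext => v; rewrite comb_pair.
  exact: cont_ip_quad.
Qed.

Lemma exists_min y : Kset !=set0 ->
  exists2 p, combm Kset m.+1 p & forall q, combm Kset m.+1 q ->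
    ip (y - p) (y - p) <= ip (y - q) (y - q).
Proof.
move=> [k0 Kk0].
have Pne : Pset !=set0.
  have l0 : forall i : 'I_m.+1, 0 <= ((i == ord0)%:R : R) by move=> i; exact: ler0n.
  have l1 : \sum_(i < m.+1) (i == ord0)%:R = 1 :> R.
    by rewrite big_ord_recl eqxx big1 ?addr0.
  have [v Pv _] := @comb_rep (fun i => (i == ord0)%:R) (fun _ => k0) (fun _ => Kk0) l0 l1.
  by exists v.
have [c cP cmin] := compact_EVT_min Pne Pset_compact (continuous_subspaceT (@F_cont y)).
have cP' : Pset c by move: cP; rewrite inE.
exists (comb c); first exact: comb_in.
move=> q [l [k [Kk l0 l1 ->]]].
have [v Pv <-] := comb_rep Kk l0 l1.
by apply: cmin; rewrite inE.
Qed.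

End Minim.


Lemma conv_fin (R : realType) (V : lmodType R) (C : set V) (I : finType) (l : I -> R) (x : I -> V) :
  (forall i, C (x i)) -> (forall i, 0 <= l i) -> \sum_i l i = 1 -> conv C (\sum_i l i *: x i).
Proof.
move=> Cx l0 l1.
have e : forall F : I -> V, \sum_i F i = \sum_(j < #|I|) F (enum_val j).
  by move=> F; rewrite (reindex (@enum_val I predT)) //; apply: onW_bij; exact: enum_val_bij.
have e' : \sum_i l i = \sum_(j < #|I|) l (enum_val j).
  by rewrite (reindex (@enum_val I predT)) //; apply: onW_bij; exact: enum_val_bij.
exists #|I|, (fun j => l (enum_val j)), (fun j => x (enum_val j)); split => //; by rewrite -?e' ?e.
Qed.

Section Main.
Variables (R : realType) (H : vectType R) (ipH : H -> H -> R) (X : vectType R) (ipX : X -> X -> R)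
  (G : Type) (mul : G -> G -> G) (one : G) (inv : G -> G) (act : G -> X -> X)
  (gamma : H -> X) (A : Type) (Lam : A -> X -> H).
Hypotheses (hipH : is_inner_product ipH) (hipX : is_inner_product ipX)
  (hG : is_group mul one inv) (hact : is_isometric_action mul one ipX act)
  (hLam : forall a, linear (Lam a)).
Variable tau : X -> X.
Hypotheses (hLiso : forall a, is_isometry ipX ipH (Lam a))
  (tauinv : forall s x, tau (act s x) = tau x)
  (tauorb : forall x, exists s, tau x = act s x)
  (tauL : forall a x, gamma (Lam a x) = tau x)
  (hC : forall Y : H, exists a, Y = Lam a (gamma Y))
  (hD : forall Y Z : H, ipH Y Z <= ipX (gamma Y) (gamma Z)).

Lemma act_lin s : linear (act s). Proof. by case: hact. Qed.
Lemma act_ip s x y : ipX (act s x) (act s y) = ipX x y.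
Proof. case: hact => _ _ hl hi; exact: (iso_ip hipX hipX (hl s) (hi s)). Qed.
Lemma act_invK s x : act (inv s) (act s x) = x.
Proof. case: hact => a1 aM _ _; case: hG => _ _ _ hl _; by rewrite -aM hl a1. Qed.
Lemma L_ip a x y : ipH (Lam a x) (Lam a y) = ipX x y.
Proof. exact: (iso_ip hipX hipH (hLam a) (hLiso a)). Qed.
Lemma L_inj a x y : Lam a x = Lam a y -> x = y.
Proof. exact: (iso_inj hipX hipH (hLam a) (hLiso a)). Qed.
Lemma key x y : ipX x y <= ipX (tau x) (tau y).
Proof.
have [a _] := hC 0; rewrite -(L_ip a) -!(tauL a); exact: hD.
Qed.
Lemma gam_nn Y : ipX (gamma Y) (gamma Y) = ipH Y Y.
Proof. by have [a {3 4}->] := hC Y; rewrite L_ip. Qed.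

Definition Kc (c : X) := Kset ipX (ipX c c) (fun w => ipX (tau c) (tau w)).

Lemma K_orb c z : Kc c z -> exists s1 s2, z = act s2 (act s1 c).
Proof.
move=> [e hz]; have [s1 e1] := tauorb c; have [s2 e2] := tauorb z.
have tz : tau c = tau z.
  apply: (ip_le0_eq hipX).
  have h1 : ipX (tau c) (tau c) = ipX c c by rewrite e1 act_ip.
  have h2 : ipX (tau z) (tau z) = ipX c c by rewrite e2 act_ip e.
  have := hz z; rewrite e; lra.
exists s1, (inv s2); by rewrite -e1 tz e2 act_invK.
Qed.

Lemma K_self c : Kc c c.
Proof. by split => // w; apply: key. Qed.

Lemma supp c y : (forall w, ipX y w <= ipX c (tau w)) ->
  forall w, exists2 k, Kc c k & ipX y w <= ipX k w.
Proof.
move=> hy w; have [s es] := tauorb w.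
have cK : act s (act (inv s) c) = c.
  case: hact => a1 aM _ _; case: hG => _ _ _ _ hr; by rewrite -aM hr a1.
exists (act (inv s) c).
  split; first by rewrite act_ip.
  by move=> w'; have := key (act (inv s) c) w'; rewrite tauinv.
by rewrite -(act_ip s (act (inv s) c) w) cK -es; apply: hy.
Qed.

Lemma KL c y : (forall w, ipX y w <= ipX c (tau w)) -> combm (Kc c) (\dim {:X}).+1 y.
Proof.
move=> hy; apply: (HL_core hipX); last exact: supp.
apply: exists_min => //; exists c; exact: K_self.
Qed.

Lemma bound_sum n (l : 'I_n -> R) (Y : 'I_n -> H) : (forall i, 0 <= l i) ->
  forall w, ipX (gamma (\sum_i l i *: Y i)) w <= ipX (\sum_i l i *: gamma (Y i)) (tau w).
Proof.
move=> l0 w; set Z := \sum_i l i *: Y i.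
have [a ea] := hC Z.
rewrite -(L_ip a) -ea /Z (ip_suml hipH) (ip_suml hipX); apply: ler_sum => i _.
rewrite (ipZl hipH) (ipZl hipX); apply: ler_wpM2l => //.
by rewrite -(tauL a); apply: hD.
Qed.

Lemma part_i (D : set X) : invariant_set act D ->
  conv (gamma @^-1` D) = gamma @^-1` (conv D).
Proof.
move=> hDinv; apply/seteqP; split => Z.
- move=> [n [l [Y [DY l0 l1 ->]]]] /=.
  set c := \sum_i l i *: gamma (Y i).
  have [mu [k [Kk mu0 mu1 e]]] := KL (@bound_sum n l Y l0).
  have [s hs] : exists s : 'I_(\dim {:X}).+1 -> G * G, forall j, k j = act (s j).2 (act (s j).1 c).
    have [f hf] := @choice _ _ (fun j (p : G * G) => k j = act p.2 (act p.1 c)) (fun j =>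
      let: ex_intro s1 (ex_intro s2 e) := K_orb (Kk j) in ex_intro _ (s1, s2) e).
    by exists f.
  pose d j i := act (s j).2 (act (s j).1 (gamma (Y i))).
  have kd j : k j = \sum_i l i *: d j i.
    rewrite hs /c (lin_sum (act_lin _)) (lin_sum (act_lin _)); apply: eq_bigr => i _.
    by rewrite (linZ (act_lin _)) (linZ (act_lin _)).
  rewrite e.
  have -> : \sum_j mu j *: k j = \sum_(p : 'I_(\dim {:X}).+1 * 'I_n) (mu p.1 * l p.2) *: d p.1 p.2.
    rewrite -(pair_big xpredT xpredT (fun j i => (mu j * l i) *: d j i)); apply: eq_bigr => j _.
    by rewrite kd scaler_sumr; apply: eq_bigr => i _; rewrite scalerA.
  apply: conv_fin.
  - by move=> p; exact: (hDinv _ _ (hDinv _ _ (DY p.2))).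
  - by move=> p; apply: mulr_ge0.
  - rewrite -(pair_big xpredT xpredT (fun j i => mu j * l i)) /=.
    by under eq_bigr do rewrite -mulr_sumr l1 mulr1.
- move=> [n [l [x [Dx l0 l1 e]]]].
  have [a ea] := hC Z.
  have -> : Z = \sum_i l i *: Lam a (x i).
    by rewrite ea e (lin_sum (hLam a)); apply: eq_bigr => i _; rewrite (linZ (hLam a)).
  exists n, l, (fun i => Lam a (x i)); split => // i /=.
  rewrite tauL; have [s ->] := tauorb (x i); exact: hDinv.
Qed.

Lemma part_ii (D : set X) : invariant_set act D -> convex_set D ->
  ext (gamma @^-1` D) = gamma @^-1` (ext D).
Proof.
move=> hDinv cD; apply/seteqP; split => Z.
- move=> [DZ hZ]; split => // y z t Dy Dz t0 t1 e.
  have [a ea] := hC Z.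
  have eZ : Z = t *: Lam a y + (1 - t) *: Lam a z.
    by rewrite {1}ea e (linD (hLam a)) !(linZ (hLam a)).
  have Dy' : D (gamma (Lam a y)) by rewrite tauL; have [s ->] := tauorb y; exact: hDinv.
  have Dz' : D (gamma (Lam a z)) by rewrite tauL; have [s ->] := tauorb z; exact: hDinv.
  have [hy hz] := hZ _ _ _ Dy' Dz' t0 t1 eZ.
  by split; apply: (@L_inj a); rewrite -ea.
- move=> [DgZ hext]; split => // Y W t DY DW t0 t1 eZ.
  set c := t *: gamma Y + (1 - t) *: gamma W.
  have Dc : D c by apply: cD => //; apply: ltW.
  have bnd : forall w, ipX (gamma Z) w <= ipX c (tau w).
    move=> w; have [a ea] := hC Z.
    rewrite -(L_ip a) -ea {1}eZ (ipDl hipH) !(ipZl hipH) /c (ipDl hipX) !(ipZl hipX).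
    have t1' : 0 <= 1 - t by lra.
    apply: lerD; apply: ler_wpM2l => //; try exact: (ltW t0); rewrite -(tauL a); exact: hD.
  have [mu [k [Kk mu0 mu1 ek]]] := KL bnd.
  have Dk : forall j, D (k j).
    by move=> j; have [s1 [s2 ->]] := K_orb (Kk j); exact: (hDinv _ _ (hDinv _ _ Dc)).
  have [j kj] := ext_comb cD (conj DgZ hext) Dk mu0 mu1 ek.
  have [nn _] := Kk j; rewrite kj in nn.
  have eHZ : ipH Z Z = t * ipH Y Z + (1 - t) * ipH W Z.
    by rewrite {1}eZ (ipDl hipH) !(ipZl hipH).
  have hY := hD Y Z; have hW := hD W Z.
  have ecZ : ipX c (gamma Z) = t * ipX (gamma Y) (gamma Z) + (1 - t) * ipX (gamma W) (gamma Z).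
    by rewrite /c (ipDl hipX) !(ipZl hipX).
  have gZ := gam_nn Z.
  have t1' : 0 < 1 - t by lra.
  have ch1 : t * ipH Y Z <= t * ipX (gamma Y) (gamma Z) by rewrite ler_pM2l.
  have ch2 : (1 - t) * ipH W Z <= (1 - t) * ipX (gamma W) (gamma Z) by rewrite ler_pM2l.
  have cgZ : c = gamma Z.
    apply: (ip_le0_eq hipX); rewrite (ipC hipX c (gamma Z)) in ecZ; rewrite (ipC hipX c (gamma Z)); lra.
  have [hYZ hWZ] := hext _ _ _ DY DW t0 t1 (esym cgZ).
  have eq1 : ipH Y Z = ipX (gamma Y) (gamma Z).
    have : ipX c (gamma Z) = ipH Z Z by rewrite cgZ gZ.
    move=> e1; apply/eqP; rewrite eq_le hY /=; rewrite -(ler_pM2l t0); lra.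
  have eq2 : ipH W Z = ipX (gamma W) (gamma Z).
    have : ipX c (gamma Z) = ipH Z Z by rewrite cgZ gZ.
    move=> e1; apply/eqP; rewrite eq_le hW /=; rewrite -(ler_pM2l t1'); lra.
  split.
  + apply: (ip_le0_eq hipH); rewrite -!gam_nn eq1 hYZ; lra.
  + apply: (ip_le0_eq hipH); rewrite -!gam_nn eq2 hWZ; lra.
Qed.

End Main.


Unset Implicit Arguments.
Set Strict Implicit.

Theorem proposition4p9 (R : realType)
  (H : vectType R) (ipH : H -> H -> R) (X : vectType R) (ipX : X -> X -> R)
  (G : Type) (mul : G -> G -> G) (one : G) (inv : G -> G) (act : G -> X -> X)
  (gamma : H -> X) (A : Type) (Lam : A -> X -> H)
  (hipH : is_inner_product ipH) (hipX : is_inner_product ipX)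
  (hG : is_group mul one inv) (hact : is_isometric_action mul one ipX act)
  (hLam : forall a, linear (Lam a))
  (hSDS : spectral_decomposition_system ipH ipX act gamma Lam)
  (D : set X) (hD0 : D !=set0) (hDinv : invariant_set act D) :
  conv (gamma @^-1` D) = gamma @^-1` (conv D) /\
  (convex_set D -> ext (gamma @^-1` D) = gamma @^-1` (ext D)).
Proof.
case: hSDS => hLiso [tau [tauinv tauorb tauL]] hC hD.
split.
- exact: (part_i hipH hipX hG hact hLam hLiso tauinv tauorb tauL hC hD hDinv).
- move=> cD; exact: (part_ii hipH hipX hG hact hLam hLiso tauinv tauorb tauL hC hD hDinv cD).
Qed.
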